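(* Let $\Gamma_n=\{P_1,\ldots,P_k\}$ with $k\ge 3$ and let $Q$ be a minimal witness of $\Gamma_n$. Then $|Q|\le n(k-1)$.
   Context: $\Gamma_n$ is a set of $k$ pairwise non-isomorphic (unlabelled) posets each of size $n$. A downset is a downward-closed subset; $D_n(Q)$ is the set of downsets of $Q$ of size $n$ up to isomorphism. $Q$ is a witness of $\Gamma_n$ if $D_n(Q)=\Gamma_n$, and a minimal witness if no proper downset of $Q$ is a witness of $\Gamma_n$. *)

(* Defs.v *)
From mathcomp Require Import all_boot.
Set Implicit Arguments. Unset Strict Implicit. Unset Printing Implicit Defensive.

Record finPoset := FinPoset {
  carrier :> finType;
  ple : rel carrier;
  ple_refl : reflexive ple;
  ple_anti : antisymmetric ple;
  ple_trans : transitive ple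
}.

Definition poset_iso (P Q : finPoset) : Prop :=
  exists f : P -> Q, bijective f /\ forall x y : P, ple x y = ple (f x) (f y).

Definition downset (Q : finPoset) (D : {set Q}) : Prop :=
  forall x y : Q, ple y x -> x \in D -> y \in D.

Section Sub.
Variables (Q : finPoset) (D : {set Q}).
Definition sub_carrier : finType := {x : Q | x \in D}.
Definition sub_le : rel sub_carrier := fun x y => ple (val x) (val y).
Lemma sub_le_refl : reflexive sub_le.
Proof. by move=> x; apply: ple_refl. Qed.
Lemma sub_le_anti : antisymmetric sub_le.
Proof. by move=> x y H; apply: val_inj; apply: ple_anti. Qed.
Lemma sub_le_trans : transitive sub_le.
Proof. by move=> x y z; apply: ple_trans. Qed.
Definition subposet : finPoset :=
  @FinPoset sub_carrier sub_le sub_le_refl sub_le_anti sub_le_trans.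
End Sub.

Definition is_Gamma (n k : nat) (Gamma : 'I_k -> finPoset) : Prop :=
  (forall i, #|Gamma i| = n) /\
  (forall i j, i != j -> ~ poset_iso (Gamma i) (Gamma j)).

(* D_n(Q) = Gamma, up to isomorphism. *)
Definition witness (n k : nat) (Gamma : 'I_k -> finPoset) (Q : finPoset) : Prop :=
  (forall D : {set Q}, downset D -> #|D| = n ->
     exists i, poset_iso (subposet D) (Gamma i)) /\
  (forall i, exists D : {set Q},
     [/\ downset D, #|D| = n & poset_iso (Gamma i) (subposet D)]).

Definition minimal_witness (n k : nat) (Gamma : 'I_k -> finPoset) (Q : finPoset) : Prop :=
  witness n Gamma Q /\
  (forall D : {set Q}, downset D -> D \proper [set: Q] ->
     ~ witness n Gamma (subposet D)).
Arguments is_Gamma n {k} Gamma.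
Arguments witness n {k} Gamma Q.
Arguments minimal_witness n {k} Gamma Q.

(* Main.v *)
Require Import Defs.
From mathcomp Require Import all_boot zify.
From Stdlib Require Import Classical ClassicalEpsilon.
Set Implicit Arguments. Unset Strict Implicit.

Lemma iso_sym (P P' : finPoset) : poset_iso P P' -> poset_iso P' P.
Proof.
case=> f [[g fK gK] H]; exists g; split; first by exists f.
by move=> x y; rewrite H !gK.
Qed.

Lemma iso_trans (P1 P2 P3 : finPoset) :
  poset_iso P1 P2 -> poset_iso P2 P3 -> poset_iso P1 P3.
Proof.
case=> f [bf Hf] [g [bg Hg]]; exists (g \o f); split; first exact: bij_comp.
by move=> x y; rewrite Hf Hg.
Qed.

Lemma iso_of_inj (P P' : finPoset) (f : P -> P') : injective f ->
  #|P'| <= #|P| -> (forall x y, ple x y = ple (f x) (f y)) -> poset_iso P P'.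
Proof. by move=> fi c H; exists f; split=> //; exact: inj_card_bij. Qed.

Lemma min_in (T : finType) (r : rel T) (rr : reflexive r)
  (ra : antisymmetric r) (rt : transitive r) (S : {set T}) (y0 : T) :
  y0 \in S -> exists2 y, y \in S & forall v, v \in S -> r v y -> v = y.
Proof.
move=> y0S.
case: (arg_minnP (fun y => #|[set v in S | r v y]|) y0S) => y yS ymin.
exists y => // v vS rvy; apply/eqP; apply: contraT => nvy.
have: [set u in S | r u v] \proper [set u in S | r u y].
  apply/properP; split.
    apply/subsetP => u; rewrite !inE => /andP[uS ruv].
    by rewrite uS (rt _ _ _ ruv rvy).
  exists y; first by rewrite !inE rr andbT; exact: yS.
  rewrite inE; apply/negP => /andP[_ ryv].
  by move/negP: nvy; apply; apply/eqP; apply: ra; rewrite rvy ryv.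
move/proper_card; rewrite ltnNge ymin //.
Qed.

Definition maximal (Q : finPoset) (x : Q) := forall v, ple x v -> v = x.

Lemma exists_max (Q : finPoset) (z : Q) : exists2 m, ple z m & maximal m.
Proof.
have := @min_in Q (fun a b => ple b a) (@ple_refl Q)
  (fun a b h => @ple_anti Q a b ltac:(by rewrite andbC))
  (fun a b c h1 h2 => @ple_trans Q _ _ _ h2 h1) [set m | ple z m] z.
rewrite inE ple_refl => /(_ isT) [y]; rewrite inE => zy ymax.
exists y => // v yv; apply: ymax => //; rewrite inE; exact: ple_trans yv.
Qed.

Definition rep (n k : nat) (Gamma : 'I_k -> finPoset) (Q : finPoset) i (D : {set Q}) :=
  [/\ downset D, #|D| = n & poset_iso (Gamma i) (subposet D)].

Lemma card_sub (Q : finPoset) (D : {set Q}) : #|subposet D| = #|D|.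
Proof. by rewrite /= /sub_carrier card_sig. Qed.

Lemma sub_witness n k (Gamma : 'I_k -> finPoset) (Q : finPoset) (U : {set Q}) :
  witness n Gamma Q -> downset U ->
  (forall i, exists D, rep n Gamma i D /\ D \subset U) ->
  witness n Gamma (subposet U).
Proof.
move=> [W1 W2] dU hR; split.
- move=> D' dD' cD'.
  pose D : {set Q} := [set proj1_sig x | x in D'].
  have dD : downset D.
    move=> x y hyx /imsetP [x' hx' ex]; subst x.
    have yU : y \in U := dU _ _ hyx (proj2_sig x').
    apply/imsetP; exists (exist _ y yU) => //.
    exact: (dD' x' (exist _ y yU) hyx hx').
  have cD : #|D| = n.
    rewrite card_imset ?cD' //; exact: val_inj.
  case: (W1 D dD cD) => i hi; exists i; apply: iso_trans hi.
  pose f (z : subposet D') : subposet D :=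
    exist _ (proj1_sig (proj1_sig z)) (imset_f _ (proj2_sig z)).
  apply: (@iso_of_inj _ _ f).
  + move=> a b /(congr1 val) /= h; apply: val_inj; exact: val_inj.
  + by rewrite !card_sub cD cD'.
  + by [].
- move=> i; case: (hR i) => D [[dD cD iD] sDU].
  pose D' : {set subposet U} := [set x | proj1_sig x \in D].
  have dD' : downset D'.
    by move=> x y hyx; rewrite !inE; apply: dD.
  have eD : [set proj1_sig x | x in D'] = D.
    apply/setP => x; apply/imsetP/idP.
      by case=> y; rewrite inE => yD ->.
    move=> xD; exists (exist _ x (subsetP sDU _ xD)) => //; by rewrite inE.
  have cD' : #|D'| = n.
    rewrite -cD -eD card_imset //; exact: val_inj.
  exists D'; split => //; refine (iso_trans iD _).
  have gP : forall z : subposet D,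
      (exist _ (proj1_sig z) (subsetP sDU _ (proj2_sig z)) : subposet U) \in D'.
    by move=> z; rewrite inE; exact: (proj2_sig z).
  pose g (z : subposet D) : subposet D' := exist (fun x => x \in D') _ (gP z).
  apply: (@iso_of_inj _ _ g).
  + move=> a b /(congr1 val) /(congr1 val) /= h; exact: val_inj.
  + by rewrite !card_sub cD cD'.
  + by [].
Qed.

Lemma forced n k (Gamma : 'I_k -> finPoset) (Q : finPoset) (x : Q) :
  minimal_witness n Gamma Q -> maximal x ->
  exists i, forall D, rep n Gamma i D -> x \in D.
Proof.
move=> [W M] mx; apply: NNPP => H.
pose U : {set Q} := [set~ x].
have dU : downset U.
  move=> a b hba; rewrite !inE; apply: contra => /eqP ebx.
  by rewrite ebx in hba; rewrite (mx _ hba).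
have pU : U \proper [set: Q].
  apply/properP; split; first exact: subsetT.
  by exists x; rewrite ?inE ?eqxx.
apply: (M U dU pU); apply: sub_witness => // i.
apply: NNPP => H2; apply: H; exists i => D hD.
case xD: (x \in D) => //; exfalso; apply: H2; exists D; split => //.
apply/subsetP => z zD; rewrite !inE; apply/eqP => zx.
by rewrite -zx zD in xD.
Qed.

Lemma iso_small (P P' : finPoset) : #|P| = #|P'| -> #|P| <= 1 -> poset_iso P P'.
Proof.
move=> E c1.
have c1' : #|P'| <= 1 by rewrite -E.
pose f (x : P) : P' := enum_val (cast_ord E (enum_rank x)).
apply: (@iso_of_inj _ _ f).
- by move=> a b /enum_val_inj /cast_ord_inj /enum_rank_inj.
- by rewrite E.
- move=> x y.
  have -> : x = y by apply: (card_le1_eqP c1).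
  by rewrite !ple_refl.
Qed.

Lemma n_ge2 n k (Gamma : 'I_k -> finPoset) : 2 < k.+1 -> is_Gamma n Gamma -> 2 <= n.
Proof.
move=> hk [hc hn]; rewrite leqNgt; apply/negP => n1.
have h0 : 0 < k by lia.
have h1 : 1 < k by lia.
apply: (hn (Ordinal h0) (Ordinal h1)) => //.
apply: iso_small; rewrite ?hc //; lia.
Qed.

Lemma cover_card (Q : finType) k n (R : 'I_k -> {set Q}) (P : pred 'I_k) (X : {set Q}) :
  (forall i, P i -> #|R i| = n) ->
  #|X :|: \bigcup_(i | P i) R i| <= #|X| + #|P| * n.
Proof.
move=> hR; apply: leq_trans (leq_card_setU _ _) _; rewrite leq_add2l.
rewrite -sum_nat_const.
apply: (@big_rec2 _ _ (fun (A : {set Q}) m => #|A| <= m)) => [|i A m Pi hA].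
  by rewrite cards0.
apply: leq_trans (leq_card_setU _ _) _; rewrite hR //; by rewrite leq_add2l.
Qed.

Lemma coverQ (Q : finPoset) (U : {set Q}) : downset U ->
  (forall x, maximal x -> x \in U) -> #|Q| <= #|U|.
Proof.
move=> dU hM; rewrite -cardsT; apply: subset_leq_card; apply/subsetP => z _.
case: (exists_max z) => m zm mm; exact: dU _ _ zm (hM m mm).
Qed.

Lemma downsetU (Q : finPoset) (A B : {set Q}) :
  downset A -> downset B -> downset (A :|: B).
Proof.
move=> dA dB x y h; rewrite !inE => /orP[xA|xB].
  by rewrite (dA _ _ h xA).
by rewrite (dB _ _ h xB) orbT.
Qed.

Lemma downset_cup (Q : finPoset) k (R : 'I_k -> {set Q}) (P : pred 'I_k) :
  (forall i, downset (R i)) -> downset (\bigcup_(i | P i) R i).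
Proof.
move=> dR x y h /bigcupP [i Pi xR]; apply/bigcupP; exists i => //.
exact: dR _ _ h xR.
Qed.

Lemma card_U1 (T : finType) (a : T) (A : {set T}) : #|a |: A| <= #|A|.+1.
Proof. by rewrite cardsU1; case: (a \in A). Qed.

Lemma min_set (Q : finPoset) (S : {set Q}) (y0 : Q) : y0 \in S ->
  exists2 y, y \in S & forall v, v \in S -> ple v y -> v = y.
Proof. exact: min_in (@ple_refl Q) (@ple_anti Q) (@ple_trans Q) S y0. Qed.

Lemma card3 k (a j l : 'I_k) : a != j -> a != l -> j != l ->
  #|[pred i | i \notin [set a; j; l]]| = k - 3.
Proof.
move=> aj al jl.
have h := cardsC [set a; j; l].
have c3 : #|[set a; j; l]| = 3.
  rewrite -setUA cardsU1 cards2 jl !inE negb_or aj al //.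
have -> : #|[pred i | i \notin [set a; j; l]]| = #|~: [set a; j; l]|.
  by apply: eq_card => i; rewrite !inE.
rewrite card_ord in h; lia.
Qed.
Unset Implicit Arguments. Set Strict Implicit.

Theorem mainTheorem12 (n k : nat) (Gamma : 'I_k -> finPoset) (Q : finPoset) :
  3 <= k -> is_Gamma n Gamma -> minimal_witness n Gamma Q ->
  #|Q| <= n * (k - 1).
Proof.
move=> hk hG hmw.
have n2 : 2 <= n by apply: (n_ge2 _ hG); lia.
have [W1 W2] := hmw.1.
pose R i := proj1_sig (constructive_indefinite_description _ (W2 i)).
have hR : forall i, rep n Gamma i (R i).
  move=> i; exact: (proj2_sig (constructive_indefinite_description _ (W2 i))).
have dR : forall i, downset (R i) by move=> i; case: (hR i).
have cR : forall i, #|R i| = n by move=> i; case: (hR i).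
have forcedQ : forall x : Q, maximal x -> exists i, forall D, rep n Gamma i D -> x \in D.
  by move=> x mx; exact: forced hmw mx.
case: (set_0Vmem [set: Q]) => [Q0 | [z _]].
  by rewrite -cardsT Q0 cards0.
have [x1 _ mx1] := exists_max z.
have [a fa] := forcedQ x1 mx1.
have x1D : x1 \in R a := fa _ (hR a).
case: (set_0Vmem (~: R a)) => [C0 | [y0 y0C]].
  have := cardsC (R a); rewrite C0 cards0 cR addn0 => <-; nia.
have [y yC ymin] := min_set y0C.
have yRa : y \notin R a by rewrite inE in yC.
pose E := y |: (R a :\ x1).
have dE : downset E.
  move=> u v hvu; rewrite !inE => /orP[/eqP uy | /andP[ux1 uRa]].
    subst u; case vRa: (v \in R a).
      case vx: (v == x1); last by rewrite orbT.
      move/eqP: vx => vx; subst v; have := mx1 _ hvu => yx.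
      by rewrite yx x1D in yRa.
    by rewrite (ymin v) ?eqxx // inE vRa.
  rewrite (dR a _ _ hvu uRa) andbT; apply/orP; right; apply/eqP => vx; subst v.
  by rewrite (mx1 _ hvu) eqxx in ux1.
have cE : #|E| = n.
  have := cardsD1 x1 (R a); rewrite x1D cR => ->.
  rewrite cardsU1 inE negb_and yRa orbT //.
have x1E : x1 \notin E.
  rewrite !inE eqxx /= orbF; apply/eqP => ex; subst y; by rewrite x1D in yRa.
have [j ij] := W1 E dE cE.
have rj : rep n Gamma j E by split => //; exact: iso_sym.
have ja : j != a by apply/eqP => ja; subst j; rewrite (fa _ rj) in x1E.
case: (classic (exists xj : Q, maximal xj /\ forall D, rep n Gamma j D -> xj \in D))
   => [[xj [mxj fj]] | Hno]; last first.
  pose U := \bigcup_(i | predC1 j i) R i.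
  have : #|Q| <= #|U|.
    apply: coverQ; first exact: downset_cup.
    move=> x mx; have [i fi] := forcedQ x mx.
    apply/bigcupP; exists i; last exact: fi _ (hR i).
    apply/eqP => ij'; subst i; apply: Hno; exists x; split => //.
  move/leq_trans; apply.
  have := @cover_card Q k n R (predC1 j) set0 (fun i _ => cR i).
  rewrite set0U cards0 cardC1 card_ord add0n => h; apply: leq_trans h _.
  rewrite mulnC; lia.
have xjE : xj \in E := fj _ rj.
have yRa' : y \in y |: R a by rewrite !inE eqxx.
have ERa : E \subset y |: R a.
  apply/subsetP => u; rewrite !inE => /orP[->//|/andP[_ ->]]; by rewrite orbT.
have xjx1 : xj != x1 by apply/eqP => e; subst xj; rewrite xjE in x1E.
case: (set_0Vmem (~: (y |: R a))) => [C0 | [w0 w0C]].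
  have := cardsC (y |: R a); rewrite C0 cards0 addn0 => <-.
  apply: leq_trans (card_U1 _ _) _; rewrite cR; nia.
have [w wC wmin] := min_set w0C.
have wyRa : w \notin y |: R a by rewrite inE in wC.
have wxj : w != xj by apply/eqP => e; subst w; rewrite (subsetP ERa _ xjE) in wyRa.
have wx1 : w != x1 by apply/eqP => e; subst w; rewrite !inE x1D orbT in wyRa.
pose E' := w |: (E :\ xj).
have dE' : downset E'.
  move=> u v hvu; rewrite in_setU1 in_setD1 => /orP[/eqP uw | /andP[uxj uE]].
    subst u; case vyRa: (v \in y |: R a); last first.
      have -> : v = w by apply: wmin => //; rewrite inE vyRa.
      by rewrite in_setU1 eqxx.
    have vxj : v != xj by apply/eqP => e; subst v; rewrite (mxj _ hvu) eqxx in wxj.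
    have vx1 : v != x1 by apply/eqP => e; subst v; rewrite (mx1 _ hvu) eqxx in wx1.
    move: vyRa; rewrite !inE vxj vx1 /= => ->; by rewrite orbT.
  have vE := dE _ _ hvu uE.
  move: vE; rewrite !inE => ->; rewrite andbT.
  have vxj : v != xj by apply/eqP => e; subst v; rewrite (mxj _ hvu) eqxx in uxj.
  by rewrite vxj orbT.
have cE' : #|E'| = n.
  have := cardsD1 xj E; rewrite xjE cE => ->.
  rewrite cardsU1 inE negb_and.
  have -> : w \notin E by apply: contra wyRa; apply: (subsetP ERa).
  by rewrite orbT.
have x1E' : x1 \notin E' by rewrite in_setU1 in_setD1 negb_or eq_sym wx1 /= negb_and x1E orbT.
have xjE' : xj \notin E' by rewrite in_setU1 in_setD1 negb_or eq_sym wxj /= eqxx.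
have [l il] := W1 E' dE' cE'.
have rl : rep n Gamma l E' by split => //; exact: iso_sym.
have la : l != a by apply/eqP => e; subst l; rewrite (fa _ rl) in x1E'.
have lj : l != j by apply/eqP => e; subst l; rewrite (fj _ rl) in xjE'.
have E'sub : E' \subset w |: (y |: R a).
  apply/subsetP => u; rewrite in_setU1 /E' in_setU1 in_setD1 => /orP[->//|/andP[_ uE]].
  by rewrite (subsetP ERa _ uE) orbT.
clearbody E' E.
pose X := R a :|: E :|: E'.
pose P := [pred i | i \notin [set a; j; l]].
pose U := X :|: \bigcup_(i | P i) R i.
have : #|Q| <= #|U|.
  apply: coverQ.
    apply: downsetU; last exact: downset_cup.
    by apply: downsetU => //; apply: downsetU.
  move=> x mx; have [i fi] := forcedQ x mx.
  rewrite /U /X !in_setU.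
  case ia: (i == a); first by move/eqP: ia => ia; subst i; rewrite (fi _ (hR a)).
  case ij': (i == j); first by move/eqP: ij' => e; subst i; rewrite (fi _ rj) orbT.
  case il': (i == l); first by move/eqP: il' => e; subst i; rewrite (fi _ rl) !orbT.
  apply/orP; right; apply/bigcupP; exists i; last exact: fi _ (hR i).
  by rewrite !inE ia ij' il'.
move/leq_trans; apply.
apply: leq_trans (cover_card X (fun i _ => cR i)) _.
have cX : #|X| <= n.+2.
  have : X \subset w |: (y |: R a).
    apply/subsetP => u /setUP [/setUP [uRa|uE]|uE'].
    - by rewrite !in_setU1 uRa !orbT.
    - by rewrite in_setU1 (subsetP ERa _ uE) orbT.
    - exact: (subsetP E'sub).
  move/subset_leq_card/leq_trans; apply.
  apply: leq_trans (card_U1 _ _) _; rewrite ltnS.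
  apply: leq_trans (card_U1 _ _) _; rewrite cR.
  done.
have cP : #|P| = k - 3.
  apply: card3; by rewrite // eq_sym.
rewrite cP; apply: leq_trans (leq_add cX (leqnn _)) _.
have : n.+2 + (k - 3) * n <= n * (k - 1).
  clear -n2 hk; nia.
by [].
Qed.
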